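(* Let $f:[0,\infty)\rightarrow[0,\infty)$ be a continuous function which is $3$-convex, nondecreasing and concave. Then for every $\alpha\in(0,1]$ the function $f^{\alpha}$ (i.e. $x\mapsto f(x)^{\alpha}$) is also continuous, $3$-convex, nondecreasing and concave on $[0,\infty)$.
   Context: A function $f$ defined on an interval $I$ is called $3$-convex if for all $x_0<x_1<x_2<x_3$ in $I$ the third-order divided difference $[x_0,x_1,x_2,x_3;f]=\sum_{j=0}^{3}\frac{f(x_j)}{\prod_{k\neq j}(x_j-x_k)}$ is nonnegative. *)

(* Defs.v *)
From HB Require Import structures.
From mathcomp Require Import all_boot all_order all_algebra.
From mathcomp Require Import all_classical all_reals all_analysis.
Set Implicit Arguments. Unset Strict Implicit. Unset Printing Implicit Defensive.
Import Order.TTheory GRing.Theory Num.Theory.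
Import numFieldNormedType.Exports.
Local Open Scope classical_set_scope.
Local Open Scope ring_scope.

Definition divdiff3 {R : realType} (f : R -> R) (x0 x1 x2 x3 : R) : R :=
  f x0 / ((x0 - x1) * (x0 - x2) * (x0 - x3))
+ f x1 / ((x1 - x0) * (x1 - x2) * (x1 - x3))
+ f x2 / ((x2 - x0) * (x2 - x1) * (x2 - x3))
+ f x3 / ((x3 - x0) * (x3 - x1) * (x3 - x2)).

Definition three_convex_nonneg {R : realType} (f : R -> R) : Prop :=
  forall x0 x1 x2 x3 : R, 0 <= x0 -> x0 < x1 -> x1 < x2 -> x2 < x3 ->
    0 <= divdiff3 f x0 x1 x2 x3.

Definition nondecreasing_nonneg {R : realType} (f : R -> R) : Prop :=
  forall x y : R, 0 <= x -> x <= y -> f x <= f y.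

Definition concave_nonneg {R : realType} (f : R -> R) : Prop :=
  forall x y t : R, 0 <= x -> 0 <= y -> 0 <= t -> t <= 1 ->
    t * f x + (1 - t) * f y <= f (t * x + (1 - t) * y).

Definition continuous_nonneg {R : realType} (f : R -> R) : Prop :=
  {within `[0, +oo[, continuous f}.

(* Main.v *)
Require Import Defs.
From HB Require Import structures.
From mathcomp Require Import all_boot all_order all_algebra.
From mathcomp Require Import all_classical all_reals all_analysis.
From mathcomp Require Import ring lra.
Import Order.TTheory GRing.Theory Num.Theory.
Import numFieldNormedType.Exports.
Local Open Scope classical_set_scope.
Local Open Scope ring_scope.
Section S.
Context {R : realType} (al : R) (al0 : 0 < al) (al1 : al <= 1).

Definition habs (y : R) := `|y| `^ al.

Lemma habs_cont : continuous habs.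
Proof.
move=> y; have [->|y0] := eqVneq y 0.
  apply/cvgrPdist_lt => e e0; apply/nbhs_normP.
  exists (e `^ al^-1); first by rewrite /= powR_gt0.
  move=> t /= Ht.
  rewrite /habs normr0 powR0 ?gt_eqF // sub0r normrN ger0_norm ?powR_ge0 //.
  have -> : e = (e `^ al^-1) `^ al by rewrite -powRrM mulVf ?gt_eqF // powRr1 // ltW.
  apply: gt0_ltr_powR => //; rewrite ?nnegrE ?powR_ge0 //.
  by move: Ht; rewrite sub0r normrN.
have -> : habs = (fun z => z `^ al) \o (@Num.norm _ R) by [].
apply: continuous_comp; first exact: norm_continuous.
apply: differentiable_continuous; apply/derivable1_diffP.
by apply: derivable_powR; rewrite in_itv /= andbT normr_gt0.
Qed.

Lemma phi_within_cont a b : 0 <= a -> {within `[a, b], continuous (fun y => y `^ al)}.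
Proof.
move=> a0.
apply: (@subspace_eq_continuous _ _ _ habs); last first.
  exact: continuous_subspaceT habs_cont.
move=> x; rewrite inE /= in_itv /= => /andP[ax _].
by rewrite /habs ger0_norm // (le_trans a0 ax).
Qed.


Definition D1 (a b fa fb : R) := (fb - fa) / (b - a).
Definition D2 (a b c fa fb fc : R) := (D1 b c fb fc - D1 a b fa fb) / (c - a).
Definition D3 (a b c d fa fb fc fd : R) :=
  (D2 b c d fb fc fd - D2 a b c fa fb fc) / (d - a).

Lemma slope_mvt (ps dps : R -> R) a b c : a < b -> b < c ->
  {within `[a, c], continuous ps} ->
  (forall x, x \in `]a, c[ -> is_derive x 1 ps (dps x)) ->
  (forall x y, a < x -> x <= y -> y < c -> dps y <= dps x) ->
  D1 b c (ps b) (ps c) <= D1 a b (ps a) (ps b).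
Proof.
move=> ab bc cps dps_ mono.
have cab : {within `[a, b], continuous ps}.
  apply: continuous_subspaceW cps => x /=; rewrite !in_itv /= => /andP[h1 h2].
  by rewrite h1 /= (le_trans h2 (ltW bc)).
have cbc : {within `[b, c], continuous ps}.
  apply: continuous_subspaceW cps => x /=; rewrite !in_itv /= => /andP[h1 h2].
  by rewrite h2 andbT (le_trans (ltW ab) h1).
have d1 : forall x, x \in `]a, b[ -> is_derive x 1 ps (dps x).
  move=> x hx; apply: dps_.
  by move: hx; rewrite !in_itv /= => /andP[-> h]; rewrite (lt_trans h bc).
have d2 : forall x, x \in `]b, c[ -> is_derive x 1 ps (dps x).
  move=> x hx; apply: dps_.
  by move: hx; rewrite !in_itv /= => /andP[h ->]; rewrite (lt_trans ab h).
have [x1 x1ab E1] := MVT ab d1 cab.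
have [x2 x2bc E2] := MVT bc d2 cbc.
move: x1ab x2bc; rewrite !in_itv /= => /andP[h1 h2] /andP[h3 h4].
rewrite /D1 E1 E2 !mulfK ?gt_eqF ?subr_gt0 //.
apply: mono => //; exact: ltW (lt_trans h2 h3).
Qed.

Lemma powR_anti (x y r : R) : 0 < x -> x <= y -> r <= 0 -> y `^ r <= x `^ r.
Proof.
move=> x0 xy r0; have y0 : 0 < y by exact: lt_le_trans xy.
have hx : 0 < x `^ (- r) by apply: powR_gt0.
have hy : 0 < y `^ (- r) by apply: powR_gt0.
have -> : r = - (- r) by rewrite opprK.
rewrite (powRN y (- r)) (powRN x (- r)).
rewrite (@lef_pV2 _ (y `^ (- r)) (x `^ (- r))) ?posrE //.
apply: (@ge0_ler_powR _ (- r)) => //.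
- by rewrite oppr_ge0.
- by rewrite nnegrE ltW.
- by rewrite nnegrE ltW.
Qed.

Notation phi := (fun y : R => y `^ al).

Lemma phi_ccv (a b c : R) : 0 <= a -> a < b -> b < c ->
  D1 b c (phi b) (phi c) <= D1 a b (phi a) (phi b).
Proof.
move=> a0 ab bc.
apply: (@slope_mvt phi (fun x => al * x `^ (al - 1))) => //.
- exact: phi_within_cont.
- move=> x; rewrite in_itv /= => /andP[ax _]; apply: is_derive1_powR.
  exact: le_lt_trans ax.
- move=> x y ax xy _; apply: ler_wpM2l; first exact: ltW.
  apply: powR_anti => //; first exact: le_lt_trans ax.
  by rewrite subr_le0.
Qed.

Lemma phi_mono (x y : R) : 0 <= x -> x <= y -> phi x <= phi y.
Proof.
move=> x0 xy; apply: ge0_ler_powR; rewrite ?nnegrE ?(ltW al0) //.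
exact: le_trans xy.
Qed.

Lemma jensen_lt (u v t : R) : 0 <= u -> u < v -> 0 < t -> t < 1 ->
  t * phi u + (1 - t) * phi v <= phi (t * u + (1 - t) * v).
Proof.
move=> u0 uv t0 t1; set w := t * u + (1 - t) * v.
have uw : u < w.
  rewrite /w -subr_gt0.
  have -> : t * u + (1 - t) * v - u = (1 - t) * (v - u) by ring.
  by apply: mulr_gt0; rewrite subr_gt0.
have wv : w < v.
  rewrite /w -subr_gt0.
  have -> : v - (t * u + (1 - t) * v) = t * (v - u) by ring.
  by apply: mulr_gt0; rewrite ?subr_gt0.
have := @phi_ccv u w v u0 uw wv; rewrite /D1.
have -> : w - u = (1 - t) * (v - u) by rewrite /w; ring.
have -> : v - w = t * (v - u) by rewrite /w; ring.
rewrite ler_pdivrMr ?mulr_gt0 ?subr_gt0 // mulrAC ler_pdivlMr ?mulr_gt0 ?subr_gt0 //.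
set Fu := phi u; set Fv := phi v; set Fw := phi w.
have vu0 : 0 < v - u by rewrite subr_gt0.
move=> H.
have H2 : ((Fv - Fw) * (1 - t)) * (v - u) <= ((Fw - Fu) * t) * (v - u).
  by move: H; congr (_ <= _); ring.
rewrite ler_pM2r // in H2.
lra.
Qed.

Lemma phi_jensen (u v t : R) : 0 <= u -> 0 <= v -> 0 <= t -> t <= 1 ->
  t * phi u + (1 - t) * phi v <= phi (t * u + (1 - t) * v).
Proof.
move=> u0 v0 t0 t1.
have [->|tn0] := eqVneq t 0.
  by rewrite !mul0r !add0r subr0 !mul1r.
have [->|tn1] := eqVneq t 1.
  by rewrite subrr !mul0r !addr0 !mul1r.
have t0' : 0 < t by rewrite lt_def tn0.
have t1' : t < 1 by rewrite lt_neqAle tn1 t1.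
have [uv|vu|->] := ltgtP u v.
- exact: jensen_lt.
- have := @jensen_lt v u (1 - t) v0 vu; rewrite subr_gt0 t1' => /(_ isT).
  rewrite ltrBlDr ltrDl t0' => /(_ isT).
  have -> : 1 - (1 - t) = t by ring.
  by rewrite (addrC (t * u `^ al)) (addrC (t * u)).
- have E : forall z : R, t * z + (1 - t) * z = z by move=> z; ring.
  by rewrite !E.
Qed.


Definition Nf (a b c A B C D : R) : R -> R :=
  fun z => A + B * (z - a) + C * ((z - a) * (z - b)) + D * ((z - a) * (z - b) * (z - c)).
Definition dN (a b c B C D y : R) : R :=
  B + C * ((y - a) + (y - b)) + D * ((y - b) * (y - c) + (y - a) * (y - c) + (y - a) * (y - b)).

Lemma derN (a b c A B C D y : R) : is_derive y 1 (Nf a b c A B C D) (dN a b c B C D y).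
Proof.
have -> : Nf a b c A B C D =
  cst A + cst B * (id - cst a) + cst C * ((id - cst a) * (id - cst b)) +
  cst D * ((id - cst a) * (id - cst b) * (id - cst c)).
  by apply/funext => z.
apply: is_derive_eq.
rewrite /= !fctE -![_ *: _]/(_ * _) /dN; ring.
Qed.

Lemma Nf_cont (a b c A B C D : R) : continuous (Nf a b c A B C D).
Proof.
move=> y; apply: differentiable_continuous; apply/derivable1_diffP.
by case: (derN a b c A B C D y).
Qed.

Lemma phi_3cvx (a b c d : R) : 0 <= a -> a < b -> b < c -> c < d ->
  0 <= D3 a b c d (phi a) (phi b) (phi c) (phi d).
Proof.
move=> a0 ab bc cd.
have ba : b - a != 0 by rewrite subr_eq0 gt_eqF.
have cb : c - b != 0 by rewrite subr_eq0 gt_eqF.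
have ca : c - a != 0 by rewrite subr_eq0 gt_eqF // (lt_trans ab bc).
have dc : d - c != 0 by rewrite subr_eq0 gt_eqF.
have db : d - b != 0 by rewrite subr_eq0 gt_eqF // (lt_trans bc cd).
have da : d - a != 0 by rewrite subr_eq0 gt_eqF // (lt_trans ab (lt_trans bc cd)).
set A := phi a; set B := D1 a b (phi a) (phi b); set C := D2 a b c (phi a) (phi b) (phi c).
set D := D3 a b c d (phi a) (phi b) (phi c) (phi d).
pose N := Nf a b c A B C D.
pose p := (fun z : R => z `^ al) - N.
have pa : p a = 0 by rewrite /p /N /Nf !fctE /A !subrr; ring.
have pb : p b = 0.
  by rewrite /p /N /Nf !fctE /A /B /C /D /D3 /D2 /D1 subrr; field; rewrite ?da ?ca ?ba ?cb ?db ?dc.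
have pc : p c = 0.
  by rewrite /p /N /Nf !fctE /A /B /C /D /D3 /D2 /D1 subrr; field; rewrite ?da ?ca ?ba ?cb ?db ?dc.
have pd : p d = 0.
  by rewrite /p /N /Nf !fctE /A /B /C /D /D3 /D2 /D1; field; rewrite ?da ?ca ?ba ?cb ?db ?dc.
have pder : forall x : R, 0 < x -> is_derive x 1 p (al * x `^ (al - 1) - dN a b c B C D x).
  move=> x x0; apply: is_deriveB; first exact: is_derive1_powR.
  exact: derN.
have pcont : forall u v : R, 0 <= u -> {within `[u, v], continuous p}.
  move=> u v u0; apply: (@subspace_eq_continuous _ _ _ (habs - N)).
    move=> x; rewrite inE /= in_itv /= => /andP[ux _].
    by rewrite /p /habs !fctE ger0_norm // (le_trans u0 ux).
  apply: continuous_subspaceT => x; apply: continuousB; first exact: habs_cont.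
  exact: Nf_cont.
have rol : forall u v : R, 0 <= u -> u < v -> p u = 0 -> p v = 0 ->
    exists2 x, u < x < v & al * x `^ (al - 1) = dN a b c B C D x.
  move=> u v u0 uv pu pv.
  have dp : forall x, x \in `]u, v[ -> derivable p x 1.
    move=> x; rewrite in_itv /= => /andP[ux _].
    by case: (pder x (le_lt_trans u0 ux)).
  have [x xin dx] := Rolle uv dp (pcont u v u0) (etrans pu (esym pv)).
  move: xin; rewrite in_itv /= => /andP[ux xv].
  exists x; first by rewrite ux xv.
  have x0 : 0 < x := le_lt_trans u0 ux.
  have [_ e1] := pder x x0; have [_ e2] := dx.
  by apply/eqP; rewrite -subr_eq0 -e1 e2.
have [x1 /andP[ax1 x1b] E1] := rol a b a0 ab pa pb.
have [x2 /andP[bx2 x2c] E2] := rol b c (le_trans a0 (ltW ab)) bc pb pc.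
have [x3 /andP[cx3 x3d] E3] := rol c d (le_trans a0 (ltW (lt_trans ab bc))) cd pc pd.
have x10 : 0 < x1 := le_lt_trans a0 ax1.
have x12 : x1 < x2 := lt_trans x1b bx2.
have x23 : x2 < x3 := lt_trans x2c cx3.
pose ps := fun x : R => - (al * x `^ (al - 1)).
have H := @slope_mvt ps (fun x => al * (1 - al) * x `^ (al - 1 - 1)) x1 x2 x3 x12 x23.
have H' : D1 x2 x3 (ps x2) (ps x3) <= D1 x1 x2 (ps x1) (ps x2).
  apply: H.
  - apply: continuous_in_subspaceT => x; rewrite inE /= in_itv /= => /andP[h _].
    have x0 : 0 < x := lt_le_trans x10 h.
    apply: differentiable_continuous; apply/derivable1_diffP.
    have -> : ps = - (al *: (fun z : R => z `^ (al - 1))) by [].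
    apply: derivableN; apply: derivableZ.
    by case: (is_derive1_powR (al - 1) x0).
  - move=> x; rewrite in_itv /= => /andP[h _].
    have x0 : 0 < x := lt_trans x10 h.
    have -> : ps = - (al *: (fun z : R => z `^ (al - 1))) by [].
    have D1' := is_derive1_powR (al - 1) x0.
    have D2' : is_derive x 1 (al *: (fun z : R => z `^ (al - 1)))
        (al *: ((al - 1) * x `^ (al - 1 - 1))) by apply: is_deriveZ.
    apply: is_derive_eq (is_deriveN D2') _.
    rewrite -[_ *: _]/(_ * _); ring.
  - move=> x y hx xy _.
    apply: ler_wpM2l; first by apply: mulr_ge0; [exact: ltW | rewrite subr_ge0].
    apply: powR_anti => //; first exact: lt_trans hx.
    by rewrite subr_le0 lerBlDr (le_trans al1) // lerDl ?ler01.
have key : D1 x1 x2 (ps x1) (ps x2) - D1 x2 x3 (ps x2) (ps x3) = 3 * D * (x3 - x1).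
  rewrite /ps E1 E2 E3 /D1 /dN.
  have h1 : x2 - x1 != 0 by rewrite subr_eq0 gt_eqF.
  have h2 : x3 - x2 != 0 by rewrite subr_eq0 gt_eqF.
  by field; rewrite ?h1 ?h2.
have : 0 <= 3 * D * (x3 - x1) by rewrite -key subr_ge0.
rewrite pmulr_lge0 ?subr_gt0 ?(lt_trans x12 x23) // pmulr_rge0 //.
Qed.


Lemma ccv_slope (h : R -> R) (a b c : R) : concave_nonneg h -> 0 <= a -> a < b -> b < c ->
  D1 b c (h b) (h c) <= D1 a b (h a) (h b).
Proof.
move=> hc a0 ab bc.
have ac : a < c := lt_trans ab bc.
have ca : 0 < c - a by rewrite subr_gt0.
have ca' : c - a != 0 by rewrite gt_eqF.
set t := (c - b) / (c - a).
have t0 : 0 <= t by rewrite /t divr_ge0 // subr_ge0 ltW.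
have t1 : t <= 1.
  by rewrite /t ler_pdivrMr // mul1r lerD2l lerN2 ltW.
have := hc a c t a0 (le_trans a0 (ltW ac)) t0 t1.
have -> : t * a + (1 - t) * c = b by rewrite /t; field; rewrite ca'.
move=> H.
have H2 : (c - b) * h a + (b - a) * h c <= (c - a) * h b.
  have E : (c - a) * (t * h a + (1 - t) * h c) = (c - b) * h a + (b - a) * h c.
    by rewrite /t; field; rewrite ca'.
  by rewrite -E; apply: ler_wpM2l => //; exact: ltW.
rewrite /D1 ler_pdivrMr ?subr_gt0 // mulrAC ler_pdivlMr ?subr_gt0 //.
move: H2; set A := h a; set B := h b; set C := h c => H2.
nra.
Qed.

Lemma D1_ge0 (h : R -> R) (a b : R) : nondecreasing_nonneg h -> 0 <= a -> a < b ->
  0 <= D1 a b (h a) (h b).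
Proof.
move=> hn a0 ab; rewrite /D1; apply: divr_ge0; rewrite subr_ge0.
- exact: hn a0 (ltW ab).
- exact: ltW.
Qed.

Lemma flat (h : R -> R) (a b c : R) : nondecreasing_nonneg h -> concave_nonneg h ->
  0 <= a -> a < b -> b < c -> h a = h b -> h b = h c.
Proof.
move=> hn hc a0 ab bc e.
have := @ccv_slope h a b c hc a0 ab bc; rewrite /D1 e subrr mul0r.
rewrite ler_pdivrMr ?subr_gt0 // mul0r subr_le0 => H.
apply/le_anti; rewrite H andbT; exact: hn (le_trans a0 (ltW ab)) (ltW bc).
Qed.

Lemma D2_le0 (a b c fa fb fc : R) : a < c -> D1 b c fb fc <= D1 a b fa fb ->
  D2 a b c fa fb fc <= 0.
Proof.
move=> ac H; rewrite /D2; apply: mulr_le0_ge0; first by rewrite subr_le0.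
by rewrite invr_ge0 subr_ge0 ltW.
Qed.

Lemma dd3E (h : R -> R) (x0 x1 x2 x3 : R) : x0 < x1 -> x1 < x2 -> x2 < x3 ->
  divdiff3 h x0 x1 x2 x3 = D3 x0 x1 x2 x3 (h x0) (h x1) (h x2) (h x3).
Proof.
move=> h01 h12 h23.
have h02 := lt_trans h01 h12; have h13 := lt_trans h12 h23.
have h03 := lt_trans h02 h23.
have n01 : x1 - x0 != 0 by rewrite subr_eq0 gt_eqF.
have n02 : x2 - x0 != 0 by rewrite subr_eq0 gt_eqF.
have n03 : x3 - x0 != 0 by rewrite subr_eq0 gt_eqF.
have n12 : x2 - x1 != 0 by rewrite subr_eq0 gt_eqF.
have n13 : x3 - x1 != 0 by rewrite subr_eq0 gt_eqF.
have n23 : x3 - x2 != 0 by rewrite subr_eq0 gt_eqF.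
have m01 : x0 - x1 != 0 by rewrite subr_eq0 lt_eqF.
have m02 : x0 - x2 != 0 by rewrite subr_eq0 lt_eqF.
have m03 : x0 - x3 != 0 by rewrite subr_eq0 lt_eqF.
have m12 : x1 - x2 != 0 by rewrite subr_eq0 lt_eqF.
have m13 : x1 - x3 != 0 by rewrite subr_eq0 lt_eqF.
have m23 : x2 - x3 != 0 by rewrite subr_eq0 lt_eqF.
rewrite /divdiff3 /D3 /D2 /D1.
by field; rewrite ?n01 ?n02 ?n03 ?n12 ?n13 ?n23 ?m01 ?m02 ?m03 ?m12 ?m13 ?m23.
Qed.

Lemma idA (x0 x1 x2 x3 f0 f1 f2 f3 g0 g1 g2 g3 : R) :
  x1 - x0 != 0 -> x2 - x0 != 0 -> x3 - x0 != 0 -> x2 - x1 != 0 -> x3 - x1 != 0 -> x3 - x2 != 0 ->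
  f1 - f0 != 0 -> f2 - f0 != 0 -> f3 - f0 != 0 -> f2 - f1 != 0 -> f3 - f1 != 0 -> f3 - f2 != 0 ->
  D3 x0 x1 x2 x3 g0 g1 g2 g3 =
    D1 f0 f3 g0 g3 * D3 x0 x1 x2 x3 f0 f1 f2 f3
  + D2 f0 f1 f3 g0 g1 g3 * D1 x0 x1 f0 f1 * D2 x1 x2 x3 f1 f2 f3
  + D2 f0 f2 f3 g0 g2 g3 * D2 x0 x1 x2 f0 f1 f2 * D1 x2 x3 f2 f3
  + D3 f0 f1 f2 f3 g0 g1 g2 g3 * D1 x0 x1 f0 f1 * D1 x1 x2 f1 f2 * D1 x2 x3 f2 f3.
Proof.
move=> n01 n02 n03 n12 n13 n23 e01 e02 e03 e12 e13 e23.
rewrite /D3 /D2 /D1.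
by field; rewrite ?n01 ?n02 ?n03 ?n12 ?n13 ?n23 ?e01 ?e02 ?e03 ?e12 ?e13 ?e23.
Qed.

Lemma idB (x0 x1 x2 x3 f0 f1 f2 g0 g1 g2 : R) :
  x1 - x0 != 0 -> x2 - x0 != 0 -> x3 - x0 != 0 -> x2 - x1 != 0 -> x3 - x1 != 0 -> x3 - x2 != 0 ->
  f1 - f0 != 0 -> f2 - f0 != 0 -> f2 - f1 != 0 ->
  D3 x0 x1 x2 x3 g0 g1 g2 g2 =
    D1 f0 f2 g0 g2 * D3 x0 x1 x2 x3 f0 f1 f2 f2
  + D2 f0 f1 f2 g0 g1 g2 * D1 x0 x1 f0 f1 * D2 x1 x2 x3 f1 f2 f2.
Proof.
move=> n01 n02 n03 n12 n13 n23 e01 e02 e12.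
rewrite /D3 /D2 /D1.
by field; rewrite ?n01 ?n02 ?n03 ?n12 ?n13 ?n23 ?e01 ?e02 ?e12.
Qed.

Lemma idC (x0 x1 x2 x3 f0 f1 g0 g1 : R) :
  x1 - x0 != 0 -> x2 - x0 != 0 -> x3 - x0 != 0 -> x2 - x1 != 0 -> x3 - x1 != 0 -> x3 - x2 != 0 ->
  f1 - f0 != 0 ->
  D3 x0 x1 x2 x3 g0 g1 g1 g1 = D1 f0 f1 g0 g1 * D3 x0 x1 x2 x3 f0 f1 f1 f1.
Proof.
move=> n01 n02 n03 n12 n13 n23 e01.
rewrite /D3 /D2 /D1.
by field; rewrite ?n01 ?n02 ?n03 ?n12 ?n13 ?n23 ?e01.
Qed.

Lemma idD (x0 x1 x2 x3 g : R) : D3 x0 x1 x2 x3 g g g g = 0.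
Proof. by rewrite /D3 /D2 /D1 !(subrr, mul0r). Qed.


Lemma phiD1_ge0 (u v : R) : 0 <= u -> u < v -> 0 <= D1 u v (phi u) (phi v).
Proof.
move=> u0 uv; rewrite /D1; apply: divr_ge0; rewrite subr_ge0.
- exact: phi_mono u0 (ltW uv).
- exact: ltW.
Qed.

Lemma phiD2_le0 (u v w : R) : 0 <= u -> u < v -> v < w ->
  D2 u v w (phi u) (phi v) (phi w) <= 0.
Proof.
move=> u0 uv vw; apply: D2_le0; first exact: lt_trans uv vw.
exact: phi_ccv.
Qed.

Lemma main_in (f : R -> R)
  (f_ge0 : forall x : R, 0 <= x -> 0 <= f x)
  (f_cont : continuous_nonneg f)
  (f_3cvx : three_convex_nonneg f)
  (f_nd : nondecreasing_nonneg f)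
  (f_ccv : concave_nonneg f) :
  let g := fun x : R => f x `^ al in
  continuous_nonneg g /\ three_convex_nonneg g /\
  nondecreasing_nonneg g /\ concave_nonneg g.
Proof.
move=> g; split; [|split; [|split]].
- rewrite /continuous_nonneg.
  apply: (@subspace_eq_continuous _ _ _ (habs \o f)).
    move=> x; rewrite inE /= in_itv /= andbT => x0.
    by rewrite /g /habs /= ger0_norm // f_ge0.
  apply: within_continuous_comp => //.
  move=> y _; exact: habs_cont.
- move=> x0 x1 x2 x3 h0 h01 h12 h23.
  have h02 := lt_trans h01 h12; have h13 := lt_trans h12 h23.
  have h03 := lt_trans h02 h23.
  have a1 : 0 <= x1 := le_trans h0 (ltW h01).
  have a2 : 0 <= x2 := le_trans a1 (ltW h12).
  have n01 : x1 - x0 != 0 by rewrite subr_eq0 gt_eqF.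
  have n02 : x2 - x0 != 0 by rewrite subr_eq0 gt_eqF.
  have n03 : x3 - x0 != 0 by rewrite subr_eq0 gt_eqF.
  have n12 : x2 - x1 != 0 by rewrite subr_eq0 gt_eqF.
  have n13 : x3 - x1 != 0 by rewrite subr_eq0 gt_eqF.
  have n23 : x3 - x2 != 0 by rewrite subr_eq0 gt_eqF.
  have Hf := f_3cvx x0 x1 x2 x3 h0 h01 h12 h23.
  rewrite (@dd3E f x0 x1 x2 x3 h01 h12 h23) in Hf.
  rewrite (@dd3E g x0 x1 x2 x3 h01 h12 h23) /g.
  have m01 : f x0 <= f x1 := f_nd x0 x1 h0 (ltW h01).
  have m12 : f x1 <= f x2 := f_nd x1 x2 a1 (ltW h12).
  have m23 : f x2 <= f x3 := f_nd x2 x3 a2 (ltW h23).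
  have s01 := @D1_ge0 f x0 x1 f_nd h0 h01.
  have s12 := @D1_ge0 f x1 x2 f_nd a1 h12.
  have s23 := @D1_ge0 f x2 x3 f_nd a2 h23.
  have c012 := @D2_le0 _ _ _ _ _ _ h02 (@ccv_slope f x0 x1 x2 f_ccv h0 h01 h12).
  have c123 := @D2_le0 _ _ _ _ _ _ h13 (@ccv_slope f x1 x2 x3 f_ccv a1 h12 h23).
  have f0g : 0 <= f x0 := f_ge0 x0 h0.
  move: m01; rewrite le_eqVlt => /orP[/eqP e01 | l01].
    have e12 := @flat f x0 x1 x2 f_nd f_ccv h0 h01 h12 e01.
    have e23 := @flat f x1 x2 x3 f_nd f_ccv a1 h12 h23 e12.
    by rewrite -e23 -e12 -e01 idD.
  have e10 : f x1 - f x0 != 0 by rewrite subr_eq0 gt_eqF.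
  move: m12; rewrite le_eqVlt => /orP[/eqP e12 | l12].
    have e23 := @flat f x1 x2 x3 f_nd f_ccv a1 h12 h23 e12.
    rewrite -e23 -e12 in Hf *.
    rewrite (@idC x0 x1 x2 x3 (f x0) (f x1) _ _ n01 n02 n03 n12 n13 n23 e10).
    apply: mulr_ge0 => //; exact: phiD1_ge0.
  have l02 := lt_trans l01 l12.
  have e20 : f x2 - f x0 != 0 by rewrite subr_eq0 gt_eqF.
  have e21 : f x2 - f x1 != 0 by rewrite subr_eq0 gt_eqF.
  have f1g : 0 <= f x1 := le_trans f0g (ltW l01).
  move: m23; rewrite le_eqVlt => /orP[/eqP e23 | l23].
    rewrite -e23 in Hf c123 *.
    rewrite (@idB x0 x1 x2 x3 (f x0) (f x1) (f x2) _ _ _ n01 n02 n03 n12 n13 n23 e10 e20 e21).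
    apply: addr_ge0.
      by apply: mulr_ge0 => //; exact: phiD1_ge0.
    apply: mulr_le0 => //; apply: mulr_le0_ge0 => //.
    exact: phiD2_le0.
  have l03 := lt_trans l02 l23.
  have l13 := lt_trans l12 l23.
  have e30 : f x3 - f x0 != 0 by rewrite subr_eq0 gt_eqF.
  have e31 : f x3 - f x1 != 0 by rewrite subr_eq0 gt_eqF.
  have e32 : f x3 - f x2 != 0 by rewrite subr_eq0 gt_eqF.
  rewrite (@idA x0 x1 x2 x3 (f x0) (f x1) (f x2) (f x3) _ _ _ _
    n01 n02 n03 n12 n13 n23 e10 e20 e30 e21 e31 e32).
  apply: addr_ge0; [apply: addr_ge0; [apply: addr_ge0|]|].
  + by apply: mulr_ge0 => //; exact: phiD1_ge0.
  + apply: mulr_le0 => //; apply: mulr_le0_ge0 => //.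
    exact: phiD2_le0.
  + apply: mulr_ge0 => //; apply: mulr_le0 => //.
    exact: phiD2_le0.
  + apply: mulr_ge0 => //; apply: mulr_ge0 => //; apply: mulr_ge0 => //.
    exact: phi_3cvx.
- move=> x y x0 xy; rewrite /g.
  apply: phi_mono; [exact: f_ge0 | exact: f_nd].
- move=> x y t x0 y0 t0 t1; rewrite /g.
  apply: le_trans (@phi_jensen (f x) (f y) t (f_ge0 x x0) (f_ge0 y y0) t0 t1) _.
  apply: phi_mono.
    apply: addr_ge0; apply: mulr_ge0 => //; rewrite ?subr_ge0 //; exact: f_ge0.
  exact: f_ccv.
Qed.

End S.

Theorem corollary1 (R : realType) (f : R -> R)
  (f_ge0 : forall x : R, 0 <= x -> 0 <= f x)
  (f_cont : continuous_nonneg f)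
  (f_3cvx : three_convex_nonneg f)
  (f_nd : nondecreasing_nonneg f)
  (f_ccv : concave_nonneg f)
  (alpha : R) (alpha_gt0 : 0 < alpha) (alpha_le1 : alpha <= 1) :
  let g := fun x : R => f x `^ alpha in
  continuous_nonneg g /\ three_convex_nonneg g /\
  nondecreasing_nonneg g /\ concave_nonneg g.
Proof.
exact: (@main_in R alpha alpha_gt0 alpha_le1 f f_ge0 f_cont f_3cvx f_nd f_ccv).
Qed.
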